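(* Let $V\subset(1,1,\dots,1)^\perp\subset\mathbb R^m$ be a self-saturated linear subspace. Then $V$ has an orthonormal basis $\{u_i\}$ such that $u_i\diamond u_j\in\mathbb Ru_i\cup\mathbb Ru_j$ for all $i\neq j$.
   Context: $\mathbb R^m$ carries its standard inner product and standard basis. For $a,b\in\mathbb R^m$, $a\diamond b=(a_1b_1,\dots,a_mb_m)$. A linear subspace $V\subset(1,\dots,1)^\perp$ is self-saturated if $a\diamond b\in V$ for all orthogonal vectors $a,b\in V$. *)

(* Defs.v *)
(* R^m is modelled as row vectors 'rV[R]_m over a real closed field R. *)
From HB Require Import structures.
From mathcomp Require Import all_boot all_order all_algebra.
Set Implicit Arguments. Unset Strict Implicit. Unset Printing Implicit Defensive.
Import Order.TTheory GRing.Theory Num.Theory.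
Local Open Scope ring_scope.

Definition dotv (R : rcfType) (m : nat) (u v : 'rV[R]_m) : R :=
  \sum_(i < m) u ord0 i * v ord0 i.

Definition hadamard (R : rcfType) (m : nat) (a b : 'rV[R]_m) : 'rV[R]_m :=
  \row_(i < m) (a ord0 i * b ord0 i).

Definition onesv (R : rcfType) (m : nat) : 'rV[R]_m := const_mx 1.

Definition in_ones_perp (R : rcfType) (m : nat) (V : {vspace 'rV[R]_m}) : Prop :=
  forall v, v \in V -> dotv v (onesv R m) = 0.

Definition self_saturated (R : rcfType) (m : nat) (V : {vspace 'rV[R]_m}) : Prop :=
  in_ones_perp V /\
  forall a b, a \in V -> b \in V -> dotv a b = 0 -> hadamard a b \in V.

(* Main.v *)
Require Import Defs.
From HB Require Import structures.
From mathcomp Require Import all_boot all_order all_algebra ring.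
Import Order.TTheory GRing.Theory Num.Theory.
Local Open Scope ring_scope.

Section Aux.
Variables (R : rcfType) (m : nat).
Implicit Types u v w x y : 'rV[R]_m.

Lemma dotvC u v : dotv u v = dotv v u.
Proof. by apply: eq_bigr => j _; rewrite mulrC. Qed.

Lemma dotvDl u v w : dotv (u + v) w = dotv u w + dotv v w.
Proof. by rewrite /dotv -big_split; apply: eq_bigr => j _; rewrite !mxE mulrDl. Qed.

Lemma dotvZl (k : R) u w : dotv (k *: u) w = k * dotv u w.
Proof. by rewrite /dotv mulr_sumr; apply: eq_bigr => j _; rewrite !mxE mulrA. Qed.

Lemma dotvNl u w : dotv (- u) w = - dotv u w.
Proof. by rewrite -scaleN1r dotvZl mulN1r. Qed.

Lemma dotvBl u v w : dotv (u - v) w = dotv u w - dotv v w.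
Proof. by rewrite dotvDl dotvNl. Qed.

Lemma dotvDr u v w : dotv w (u + v) = dotv w u + dotv w v.
Proof. by rewrite dotvC dotvDl !(dotvC w). Qed.

Lemma dotvZr (k : R) u w : dotv w (k *: u) = k * dotv w u.
Proof. by rewrite dotvC dotvZl dotvC. Qed.

Lemma dotvBr u v w : dotv w (u - v) = dotv w u - dotv w v.
Proof. by rewrite dotvC dotvBl !(dotvC w). Qed.

Lemma dotv_suml n (F : 'I_n -> 'rV[R]_m) w :
  dotv (\sum_(k < n) F k) w = \sum_(k < n) dotv (F k) w.
Proof.
rewrite /dotv; under eq_bigr => j _ do rewrite summxE mulr_suml.
by rewrite exchange_big.
Qed.

Lemma dotv_sumr n (F : 'I_n -> 'rV[R]_m) w :
  dotv w (\sum_(k < n) F k) = \sum_(k < n) dotv w (F k).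
Proof. by rewrite dotvC dotv_suml; apply: eq_bigr => k _; rewrite dotvC. Qed.

Lemma dotv_ge0 u : 0 <= dotv u u.
Proof. by apply: sumr_ge0 => j _; rewrite -expr2 sqr_ge0. Qed.

Lemma dotv_eq0 u : dotv u u = 0 -> u = 0.
Proof.
move=> h; apply/rowP => j; rewrite mxE.
have := psumr_eq0P (fun j _ => sqr_ge0 (u ord0 j)) _ (isT : predT j).
have h' : \sum_(k < m) u ord0 k ^+ 2 = 0.
  by rewrite -[RHS]h; apply: eq_bigr => k _; rewrite expr2.
by move=> /(_ h') /eqP; rewrite sqrf_eq0 => /eqP.
Qed.

Lemma tri1 x y z : dotv x (hadamard y z) = dotv (hadamard x y) z.
Proof. by apply: eq_bigr => j _; rewrite !mxE mulrA. Qed.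

Lemma tri2 x y z : dotv (hadamard x y) z = dotv (hadamard x z) y.
Proof. by apply: eq_bigr => j _; rewrite !mxE; ring. Qed.

Lemma hadC x y : hadamard x y = hadamard y x.
Proof. by apply/rowP => j; rewrite !mxE mulrC. Qed.

Lemma hadDr x y z : hadamard x (y + z) = hadamard x y + hadamard x z.
Proof. by apply/rowP => j; rewrite !mxE mulrDr. Qed.

Lemma satG {V : {vspace 'rV[R]_m}} {x y} : self_saturated V ->
  x \in V -> y \in V -> dotv x y = 0 ->
  dotv y y *: hadamard x x - dotv x x *: hadamard y y \in V.
Proof.
case=> _ hs xV yV xy.
have yx : dotv y x = 0 by rewrite dotvC.
set p := x + y; set q := dotv y y *: x - dotv x x *: y.
have pV : p \in V by rewrite memvD.
have qV : q \in V by rewrite memvB // memvZ.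
have pq : dotv p q = 0.
  rewrite /p /q dotvDl !dotvBr !dotvZr xy yx; ring.
have := hs _ _ pV qV pq; have := hs _ _ xV yV xy => h1 h2.
have -> : dotv y y *: hadamard x x - dotv x x *: hadamard y y =
  hadamard p q - (dotv y y - dotv x x) *: hadamard x y.
  apply/rowP => j; rewrite !mxE; ring.
by rewrite memvB // memvZ.
Qed.

Lemma keylemma {V H : {vspace 'rV[R]_m}} {i : 'I_m} {a} :
  self_saturated V ->
  (forall v, (v \in H) = (v \in V) && (v ord0 i == 0)) ->
  a \in V -> dotv a a = 1 -> (forall h, h \in H -> dotv a h = 0) ->
  exists c, forall h, h \in H -> hadamard a h = c *: h.
Proof.
move=> sV memH aV a1 aH.
set c := dotv a (hadamard a a) - a ord0 i.
have stepA : forall h, h \in H -> dotv (hadamard a h) h = c * dotv h h.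
  move=> h hH; move: (hH); rewrite memH => /andP[hV /eqP hi].
  have zV := satG sV aV hV (aH h hH).
  rewrite a1 scale1r in zV.
  set z := (dotv h h *: hadamard a a - hadamard h h) in zV.
  have wH : z - (dotv h h * a ord0 i) *: a \in H.
    rewrite memH memvB ?memvZ //=; apply/eqP; rewrite !mxE hi; ring.
  have := aH _ wH; rewrite dotvBr dotvZr a1 /z dotvBr dotvZr => e.
  rewrite -tri1 /c.
  apply/eqP; rewrite eq_sym -subr_eq0 -[X in _ == X]e; apply/eqP; ring.
have stepB : forall h g, h \in H -> g \in H ->
    dotv (hadamard a h) g = c * dotv h g.
  move=> h g hH gH.
  have hgH : h + g \in H by rewrite memvD.
  have := stepA _ hgH; rewrite hadDr !dotvDl !dotvDr stepA // stepA //.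
  rewrite (tri2 a g h) (dotvC g h) => e.
  have e2 : 2 * dotv (hadamard a h) g = 2 * (c * dotv h g).
    apply/eqP; rewrite -subr_eq0; apply/eqP.
    have -> : 2 * dotv (hadamard a h) g - 2 * (c * dotv h g) =
     (c * dotv h h + dotv (hadamard a h) g + (dotv (hadamard a h) g + c * dotv g g)) -
     c * (dotv h h + dotv h g + (dotv h g + dotv g g)) by ring.
    by rewrite e subrr.
  by apply: (mulfI _ e2); rewrite pnatr_eq0.
exists c => h hH; move: (hH); rewrite memH => /andP[hV /eqP hi].
set e := hadamard a h - c *: h.
have eH : e \in H.
  case: sV => [sp hs].
  rewrite memH memvB ?memvZ ?hs ?aH //=; apply/eqP; rewrite !mxE hi; ring.
have : dotv e e = 0.
  rewrite {1}/e dotvBl dotvZl stepB // subrr //.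
by move/dotv_eq0/eqP; rewrite subr_eq0 => /eqP.
Qed.

Definition colf (i : 'I_m) : 'Hom('rV[R]_m, 'M[R]_1) := linfun (fun v : 'rV[R]_m => col i v).

Lemma memH (V : {vspace 'rV[R]_m}) i v :
  (v \in (V :&: lker (colf i))%VS) = (v \in V) && (v ord0 i == 0).
Proof.
rewrite memv_cap memv_ker lfunE /=; congr (_ && _).
apply/eqP/eqP => [/matrixP/(_ ord0 ord0)|h]; rewrite ?mxE //.
by apply/matrixP => p q; rewrite !ord1 !mxE.
Qed.

Lemma sat_sub (V : {vspace 'rV[R]_m}) i :
  self_saturated V -> self_saturated (V :&: lker (colf i))%VS.
Proof.
case=> hp hs; split.
  by move=> v; rewrite memH => /andP[vV _]; exact: hp.
move=> a b; rewrite !memH => /andP[aV /eqP ai] /andP[bV /eqP bi] ab.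
by rewrite hs //= mxE ai mul0r.
Qed.

Definition goodseq (V : {vspace 'rV[R]_m}) (s : seq 'rV[R]_m) :=
  [/\ basis_of V s,
      (forall i j, (i < size s)%N -> (j < size s)%N ->
           dotv s`_i s`_j = (i == j)%:R)
    & (forall j k, (j < k)%N -> (k < size s)%N ->
           exists c : R, hadamard s`_j s`_k = c *: s`_k)].

Lemma step (V : {vspace 'rV[R]_m}) :
  (forall H : {vspace 'rV[R]_m}, (\dim H < \dim V)%N -> self_saturated H ->
     exists s, goodseq H s) ->
  self_saturated V -> exists s, goodseq V s.
Proof.
move=> IH sV.
have [V0|V0] := eqVneq V 0%VS.
  exists [::]; split => //; first by rewrite V0 /basis_of span_nil eqxx nil_free.
set w := vpick V; have wV : w \in V := memv_pick V.
have w0 : w != 0 by rewrite vpick0.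
have [i wi] : exists i, w ord0 i != 0.
  case: (pickP (fun j => w ord0 j != 0)) => [j hj|h]; first by exists j.
  have : w = 0 by apply/rowP => j; rewrite mxE; move: (h j) => /= /negbFE/eqP.
  by move/eqP; rewrite (negbTE w0).
set H := (V :&: lker (colf i))%VS.
have mH : forall v, (v \in H) = (v \in V) && (v ord0 i == 0) by move=> v; exact: memH.
have HV : (H <= V)%VS := capvSl _ _.
have dH : (\dim H < \dim V)%N.
  rewrite (ltn_leqif (dimv_leqif_eq HV)); apply/negP => /eqP HeV.
  by move: wV; rewrite -HeV mH (negbTE wi) andbF.
have [sH [bH onH prH]] := IH H dH (sat_sub V i sV).
have spanH : <<sH>>%VS = H by case/andP: bH => /eqP.
have sHH : forall k, (k < size sH)%N -> sH`_k \in H.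
  by move=> k hk; rewrite -spanH memv_span // mem_nth.
set u0 := w - \sum_(k < size sH) dotv w sH`_k *: sH`_k.
have u0V : u0 \in V.
  rewrite memvB // memv_suml // => k _; rewrite memvZ //.
  exact: (subvP HV _ (sHH k (ltn_ord k))).
have u0i : u0 ord0 i = w ord0 i.
  rewrite !mxE summxE big1 ?subr0 // => k _; rewrite mxE.
  by move: (sHH k (ltn_ord k)); rewrite mH => /andP[_ /eqP ->]; rewrite mulr0.
have u0k : forall k, (k < size sH)%N -> dotv u0 sH`_k = 0.
  move=> k hk; rewrite dotvBl dotv_suml (bigD1 (Ordinal hk)) //= big1.
    by rewrite dotvZl onH // eqxx mulr1 addr0 subrr.
  move=> l hl; rewrite dotvZl onH //; case: eqP => [e|_]; last by rewrite mulr0.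
  by move: hl; rewrite (_ : l = Ordinal hk) ?eqxx //; apply: val_inj.
have u0H : forall h, h \in H -> dotv u0 h = 0.
  move=> h; rewrite -spanH => hs; rewrite (coord_span (X := in_tuple sH) hs).
  by rewrite dotv_sumr big1 // => k _; rewrite dotvZr u0k ?mulr0.
have u00 : dotv u0 u0 != 0.
  by apply/eqP => /dotv_eq0 /rowP /(_ i); rewrite u0i mxE; apply/eqP.
set r := Num.sqrt (dotv u0 u0).
have r0 : 0 < r by rewrite sqrtr_gt0 lt_def u00 dotv_ge0.
set u := r^-1 *: u0.
have uV : u \in V by rewrite memvZ.
have u1 : dotv u u = 1.
  have d : dotv u0 u0 = r ^+ 2 by rewrite sqr_sqrtr ?dotv_ge0.
  rewrite /u dotvZl dotvZr d; field; exact: lt0r_neq0.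
have uH : forall h, h \in H -> dotv u h = 0.
  by move=> h hh; rewrite /u dotvZl u0H ?mulr0.
have ui : u ord0 i != 0 by rewrite mxE u0i mulf_neq0 // invr_eq0 gt_eqF.
have [c hc] := keylemma sV mH uV u1 uH.
exists (u :: sH); split.
- rewrite /basis_of free_cons span_cons spanH; apply/and3P; split.
  + rewrite eqEsubv subv_add -memvE uV capvSl /=; apply/subvP => v vV.
    set t := v ord0 i / u ord0 i.
    have -> : v = t *: u + (v - t *: u) by rewrite addrC subrK.
    apply: memv_add; first by rewrite memvZ ?memv_line.
    have hw : (v - t *: u) ord0 i = v ord0 i - t * u ord0 i by rewrite !mxE.
    by rewrite mH memvB ?memvZ //= hw /t divfK // subrr.
  + by rewrite mH (negbTE ui) andbF.
  + by case/andP: bH.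
- move=> [|j] [|k] /= hj hk.
  + by rewrite u1.
  + by rewrite uH ?sHH.
  + by rewrite dotvC uH ?sHH.
  + exact: onH.
- move=> [|j] [|k] //= hjk hk.
  + by exists c; rewrite hc ?sHH.
  + exact: prH.
Qed.

Lemma mainind {n} {V : {vspace 'rV[R]_m}} :
  (\dim V <= n)%N -> self_saturated V -> exists s, goodseq V s.
Proof.
elim: n V => [|n IH] V dV; apply: step => H dH.
  by move: (leq_trans dH dV).
by apply: IH; rewrite -ltnS (leq_trans dH dV).
Qed.

End Aux.

Theorem mainTheorem9 (R : rcfType) (m : nat) (V : {vspace 'rV[R]_m}) :
  self_saturated V ->
  exists s : seq 'rV[R]_m,
    [/\ basis_of V s,
        (forall i j, (i < size s)%N -> (j < size s)%N ->
           dotv s`_i s`_j = (i == j)%:R)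
      & (forall i j, (i < size s)%N -> (j < size s)%N -> i != j ->
           (exists c : R, hadamard s`_i s`_j = c *: s`_i) \/
           (exists c : R, hadamard s`_i s`_j = c *: s`_j))].
Proof.
move=> sV; have [s [bs ons prs]] := @mainind R m _ V (leqnn _) sV.
exists s; split => // i j hi hj nij.
case: (ltngtP i j) => [lij|lji|eij]; last by rewrite eij eqxx in nij.
- by right; exact: prs.
- by left; have [c e] := prs j i lji hi; exists c; rewrite hadC.
Qed.
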